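(* Let $\Omega\subset\mathbb{R}^2$ be a convex polygon and $\Gamma$ a $C^2$ curve in $\Omega$ (the interface). Assume $\mathcal U_h$ is a quasi-uniform triangulation of $\Omega$ satisfying $Minac(\alpha)$, and $\mathcal F_h$ is the interface-fitted mesh generated from $\mathcal U_h$. Then there exist $N_\alpha\in\mathbb{R}$ and $\psi_\alpha\in(0,\pi)$ depending only on $\alpha$ such that every triangle $T\in\mathcal F_h$ satisfies $Maxac(\psi_\alpha)$ and every quadrilateral $K\in\mathcal F_h$ satisfies $RDP(N_\alpha,\psi_\alpha)$.
   Context: A triangle or quadrilateral satisfies $Minac(\alpha)$ if all its angles are $\ge\alpha$, and $Maxac(\psi)$ if all its angles are $\le\psi$; a mesh satisfies $Minac(\alpha)$ if all its elements do. A convex quadrilateral $K$ satisfies $RDP(N,\psi)$ if it can be divided along one of its diagonals $d_1$ into two triangles such that $|d_2|/|d_1|\le N$ ($d_2$ the other diagonal) and both triangles satisfy $Maxac(\psi)$. Interface-fitted mesh: for each triangle of $\mathcal U_h$ whose intersection with $\Gamma$ has positive length, $\Gamma$ crosses two of its edges; connecting successively the intersection points of $\Gamma$ with the edges of $\mathcal U_h$ by straight segments cuts each such triangle into a triangle and a quadrilateral; $\mathcal F_h$ consists of these pieces together with the triangles of $\mathcal U_h$ not crossed by $\Gamma$. *)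

(* Defs.v *)
From HB Require Import structures.
From mathcomp Require Import all_boot all_order all_algebra.
From mathcomp Require Import all_classical all_reals all_analysis.
Set Implicit Arguments. Unset Strict Implicit. Unset Printing Implicit Defensive.
Import Order.TTheory GRing.Theory Num.Theory.
Import numFieldNormedType.Exports.
Local Open Scope classical_set_scope.
Local Open Scope ring_scope.

Section Geometry.
Variable R : realType.

Definition pt := (R * R)%type.
Definition psub (p q : pt) : pt := (p.1 - q.1, p.2 - q.2).
Definition dot (u v : pt) : R := u.1 * v.1 + u.2 * v.2.
Definition cross (u v : pt) : R := u.1 * v.2 - u.2 * v.1.
Definition enorm (u : pt) : R := Num.sqrt (dot u u).
Definition dist (p q : pt) : R := enorm (psub p q).

Definition angle (p q r : pt) : R :=
  acos (dot (psub p q) (psub r q) / (dist p q * dist r q)).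

Definition seg (p q : pt) : set pt :=
  [set x | exists t : R, 0 <= t <= 1 /\ x = (p.1 + t * (q.1 - p.1), p.2 + t * (q.2 - p.2))].
Definition oseg (p q : pt) : set pt :=
  [set x | exists t : R, 0 < t < 1 /\ x = (p.1 + t * (q.1 - p.1), p.2 + t * (q.2 - p.2))].

Definition conv_hull (vs : seq pt) : set pt :=
  [set x | exists l : nat -> R, (forall i, 0 <= l i) /\
     \sum_(i < size vs) l i = 1 /\
     x = (\sum_(i < size vs) l i * (nth (0, 0) vs i).1,
          \sum_(i < size vs) l i * (nth (0, 0) vs i).2)].

Definition convex_polygon (Omega : set pt) : Prop :=
  exists vs : seq pt, Omega = conv_hull vs /\ interior Omega !=set0.

Definition tri := (pt * pt * pt)%type.
Definition tv1 (T : tri) : pt := T.1.1.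
Definition tv2 (T : tri) : pt := T.1.2.
Definition tv3 (T : tri) : pt := T.2.
Definition tverts (T : tri) : seq pt := [:: tv1 T; tv2 T; tv3 T].
Definition tset (T : tri) : set pt := conv_hull (tverts T).
Definition tbdry (T : tri) : set pt :=
  seg (tv1 T) (tv2 T) `|` seg (tv2 T) (tv3 T) `|` seg (tv3 T) (tv1 T).
Definition nondeg (T : tri) : Prop :=
  cross (psub (tv2 T) (tv1 T)) (psub (tv3 T) (tv1 T)) != 0.

Definition Minac_tri (alpha : R) (a b c : pt) : Prop :=
  [/\ alpha <= angle b a c, alpha <= angle a b c & alpha <= angle a c b].
Definition Maxac_tri (psi : R) (a b c : pt) : Prop :=
  [/\ angle b a c <= psi, angle a b c <= psi & angle a c b <= psi].

Definition Minac_mesh (alpha : R) (Uh : seq tri) : Prop :=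
  forall T, T \in Uh -> Minac_tri alpha (tv1 T) (tv2 T) (tv3 T).

Definition triangulation (Omega : set pt) (Uh : seq tri) : Prop :=
  [/\ forall T, T \in Uh -> nondeg T,
      \bigcup_(T in [set T | T \in Uh]) tset T = Omega &
      forall T1 T2, T1 \in Uh -> T2 \in Uh -> T1 != T2 ->
        let S := tset T1 `&` tset T2 in
        [\/ S = set0,
            (exists v, [/\ v \in tverts T1, v \in tverts T2 & S = [set v]]) |
            (exists v w, [/\ v != w, (v \in tverts T1) && (v \in tverts T2),
                            (w \in tverts T1) && (w \in tverts T2) & S = seg v w])]].

Definition tdiam (T : tri) : R :=
  Num.max (dist (tv1 T) (tv2 T)) (Num.max (dist (tv2 T) (tv3 T)) (dist (tv3 T) (tv1 T))).
Definition tminedge (T : tri) : R :=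
  Num.min (dist (tv1 T) (tv2 T)) (Num.min (dist (tv2 T) (tv3 T)) (dist (tv3 T) (tv1 T))).
Definition meshsize (Uh : seq tri) : R := \big[Num.max/0]_(T <- Uh) tdiam T.
Definition quasi_uniform (Uh : seq tri) : Prop :=
  exists c : R, 0 < c /\ forall T, T \in Uh -> c * meshsize Uh <= tminedge T.

Definition C2 (f : R -> R) : Prop :=
  [/\ forall t, derivable f t 1, forall t, derivable (derive1 f) t 1 & continuous (derive1 (derive1 f))].
Definition regular_curve (gx gy : R -> R) : Prop :=
  forall t, 0 <= t <= 1 -> (derive1 gx t, derive1 gy t) != (0, 0).
Definition Gamma (gx gy : R -> R) : set pt :=
  [set (gx t, gy t) | t in [set t : R | 0 <= t <= 1]].

Definition speed (gx gy : R -> R) (t : R) : R :=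
  Num.sqrt (derive1 gx t ^+ 2 + derive1 gy t ^+ 2).
Definition curve_length_in (gx gy : R -> R) (S : set pt) : \bar R :=
  \int[@lebesgue_measure R]_(t in [set t : R | 0 <= t <= 1 /\ S (gx t, gy t)])
     (speed gx gy t)%:E.
Definition crossed (gx gy : R -> R) (T : tri) : Prop :=
  (0 < curve_length_in gx gy (tset T))%E.

Definition cut_by (gx gy : R -> R) (T : tri) (A B C P Q : pt) : Prop :=
  [/\ perm_eq [:: A; B; C] (tverts T), oseg A B P, oseg A C Q &
      Gamma gx gy `&` tbdry T = [set x | x = P \/ x = Q]].

Inductive elem := Tri of pt & pt & pt | Quad of pt & pt & pt & pt.

Definition interface_fitted (gx gy : R -> R) (Uh : seq tri) (Fh : set elem) : Prop :=
  (forall T, T \in Uh -> crossed gx gy T ->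
     exists A B C P Q, cut_by gx gy T A B C P Q) /\
  Fh = [set e | (exists T, [/\ T \in Uh, ~ crossed gx gy T &
                               e = Tri (tv1 T) (tv2 T) (tv3 T)]) \/
                (exists T A B C P Q, [/\ T \in Uh, crossed gx gy T,
                               cut_by gx gy T A B C P Q &
                               (e = Tri A P Q \/ e = Quad P B C Q)])].

Definition convex_quad (v0 v1 v2 v3 : pt) : Prop :=
  let c0 := cross (psub v1 v0) (psub v2 v1) in
  let c1 := cross (psub v2 v1) (psub v3 v2) in
  let c2 := cross (psub v3 v2) (psub v0 v3) in
  let c3 := cross (psub v0 v3) (psub v1 v0) in
  [/\ 0 < c0, 0 < c1, 0 < c2 & 0 < c3] \/ [/\ c0 < 0, c1 < 0, c2 < 0 & c3 < 0].

Definition RDP (N psi : R) (v0 v1 v2 v3 : pt) : Prop :=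
  convex_quad v0 v1 v2 v3 /\
  ((dist v1 v3 / dist v0 v2 <= N /\ Maxac_tri psi v0 v1 v2 /\ Maxac_tri psi v0 v2 v3) \/
   (dist v0 v2 / dist v1 v3 <= N /\ Maxac_tri psi v1 v2 v3 /\ Maxac_tri psi v1 v3 v0)).

Definition elem_ok (N psi : R) (e : elem) : Prop :=
  match e with
  | Tri a b c => Maxac_tri psi a b c
  | Quad a b c d => RDP N psi a b c d
  end.

End Geometry.

(* Main.v *)
Require Import Defs.
From HB Require Import structures.
From mathcomp Require Import all_boot all_order all_algebra.
From mathcomp Require Import all_classical all_reals all_analysis.
From mathcomp Require Import ring lra.
Import Order.TTheory GRing.Theory Num.Theory.
Import numFieldNormedType.Exports.
Local Open Scope classical_set_scope.
Local Open Scope ring_scope.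

Section Aux.
Variable R : realType.
Implicit Types a b c : R.

Lemma tri_alg a b c : 0 < a -> 0 < b -> 0 < c -> a <= b + c -> b <= a + c -> c <= a + b ->
  let x := (c^+2 + b^+2 - a^+2) / (2 * (c * b)) in
  let y := (c^+2 + a^+2 - b^+2) / (2 * (c * a)) in
  let z := (b^+2 + a^+2 - c^+2) / (2 * (b * a)) in
  [/\ 0 <= x + y, 0 <= x + z, 0 <= y + z, x^+2 + y^+2 + z^+2 + 2 * x * y * z = 1 &
      [/\ -1 <= x <= 1, -1 <= y <= 1 & -1 <= z <= 1]].
Proof.
move=> a0 b0 c0 h1 h2 h3 x y z.
have nz : [&& a != 0, b != 0 & c != 0] by rewrite !gt_eqF.
have nz' : [&& c != 0, b != 0 & a != 0] by rewrite !gt_eqF.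
have nz2 : [&& c != 0 & b != 0] by rewrite !gt_eqF.
have nz3 : [&& c != 0 & a != 0] by rewrite !gt_eqF.
have nz4 : [&& b != 0 & a != 0] by rewrite !gt_eqF.
have p3 : 0 < 2 * a * b * c by rewrite !mulr_gt0.
have pcb : 0 < 2 * (c * b) by rewrite !mulr_gt0.
have pca : 0 < 2 * (c * a) by rewrite !mulr_gt0.
have pba : 0 < 2 * (b * a) by rewrite !mulr_gt0.
have g3 : forall u v w : R, 0 <= u -> 0 <= v -> 0 <= w -> 0 <= u * (v * w) / (2 * a * b * c).
  move=> u v w u0 v0 w0; apply: divr_ge0; last exact: ltW.
  by rewrite !mulr_ge0.
have g2 : forall (u v d : R), 0 <= u -> 0 <= v -> 0 < d -> 0 <= u * v / d.
  move=> u v d u0 v0 d0; apply: divr_ge0; last exact: ltW.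
  by rewrite !mulr_ge0.
split.
- have -> : x + y = (a + b) * ((c - a + b) * (c + a - b)) / (2 * a * b * c).
    rewrite /x /y; (field; rewrite ?gt_eqF //).
  apply: g3; lra.
- have -> : x + z = (a + c) * ((b - a + c) * (b + a - c)) / (2 * a * b * c).
    rewrite /x /z; (field; rewrite ?gt_eqF //).
  apply: g3; lra.
- have -> : y + z = (b + c) * ((a - b + c) * (a + b - c)) / (2 * a * b * c).
    rewrite /y /z; (field; rewrite ?gt_eqF //).
  apply: g3; lra.
- rewrite /x /y /z; (field; rewrite ?gt_eqF //).
- have e1 : 1 - x = (a - c + b) * (a + c - b) / (2 * (c * b))
  by rewrite /x; (field; rewrite ?gt_eqF //).
have e2 : x + 1 = (c + b - a) * (c + b + a) / (2 * (c * b)) by rewrite /x; (field; rewrite ?gt_eqF //).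
have e3 : 1 - y = (b - c + a) * (b + c - a) / (2 * (c * a)) by rewrite /y; (field; rewrite ?gt_eqF //).
have e4 : y + 1 = (c + a - b) * (c + a + b) / (2 * (c * a)) by rewrite /y; (field; rewrite ?gt_eqF //).
have e5 : 1 - z = (c - b + a) * (c + b - a) / (2 * (b * a)) by rewrite /z; (field; rewrite ?gt_eqF //).
have e6 : z + 1 = (b + a - c) * (b + a + c) / (2 * (b * a)) by rewrite /z; (field; rewrite ?gt_eqF //).
have f1 : 0 <= 1 - x by rewrite e1; apply: g2 => //; lra.
have f2 : 0 <= x + 1 by rewrite e2; apply: g2 => //; lra.
have f3 : 0 <= 1 - y by rewrite e3; apply: g2 => //; lra.
have f4 : 0 <= y + 1 by rewrite e4; apply: g2 => //; lra.
have f5 : 0 <= 1 - z by rewrite e5; apply: g2 => //; lra.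
have f6 : 0 <= z + 1 by rewrite e6; apply: g2 => //; lra.
split; apply/andP; split; lra.
Qed.

Lemma third_bound (k x y z : R) : 0 <= k < 1 ->
  x^+2 + y^+2 + z^+2 + 2 * x * y * z = 1 ->
  -1 <= x <= 1 -> -1 <= y <= 1 -> - k <= z ->
  x <= (3 + k) / 4 \/ y <= (3 + k) / 4.
Proof.
move=> /andP[k0 k1] id /andP[x0 x1] /andP[y0 y1] zk.
set m := (3 + k) / 4.
have m1 : m < 1 by rewrite /m; lra.
have m2 : (1 + k) / 2 <= m ^+ 2.
  have e : m ^+ 2 - (1 + k) / 2 = ((1 - k) / 4) ^+ 2 by rewrite /m; field.
  have := sqr_ge0 ((1 - k) / 4); lra.
case: (lerP x m) => hx; first by left.
case: (lerP y m) => hy; first by right.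
exfalso.
have e : (z + x * y) ^+ 2 = (1 - x^+2) * (1 - y^+2).
  have -> : (1 - x ^+ 2) * (1 - y ^+ 2) = x ^+ 2 + y ^+ 2 + z ^+ 2 + 2 * x * y * z - x^+2 - y^+2 + x^+2 * y^+2 by rewrite id; ring.
  ring.
have mp : 0 < m by rewrite /m; lra.
have ax : 0 <= 1 - x^+2 <= 1 - m^+2 by apply/andP; split; nra.
have ay : 0 <= 1 - y^+2 <= 1 - m^+2 by apply/andP; split; nra.
have b : (z + x * y) ^+ 2 <= (1 - m^+2) ^+ 2.
  rewrite e expr2; case/andP: ax => ? ?; case/andP: ay => ? ?.
  by apply: ler_pM.
have pos : 0 < z + x * y by nra.
have c : z + x * y <= 1 - m^+2 by nra.
nra.
Qed.


Definition cs (p q r : pt R) : R := dot (psub p q) (psub r q) / (dist p q * dist r q).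

Lemma dist2 (p q : pt R) : dist p q ^+ 2 = (p.1 - q.1)^+2 + (p.2 - q.2)^+2.
Proof.
rewrite /dist /enorm sqr_sqrtr /dot /psub /=; first by ring.
by apply: addr_ge0; rewrite -expr2 sqr_ge0.
Qed.

Lemma dist_ge0 (p q : pt R) : 0 <= dist p q.
Proof. exact: sqrtr_ge0. Qed.

Lemma dist_sym (p q : pt R) : dist p q = dist q p.
Proof. by rewrite /dist /enorm /dot /psub /=; congr Num.sqrt; ring. Qed.

Lemma dot_sq (p q r : pt R) : dot (psub p q) (psub r q) ^+ 2 <= (dist p q * dist r q) ^+ 2.
Proof.
rewrite exprMn !dist2 /dot /psub /=.
set u1 := p.1 - q.1; set u2 := p.2 - q.2; set v1 := r.1 - q.1; set v2 := r.2 - q.2.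
have e : (u1 ^+ 2 + u2 ^+ 2) * (v1 ^+ 2 + v2 ^+ 2) - (u1 * v1 + u2 * v2) ^+ 2
   = (u1 * v2 - u2 * v1) ^+ 2 by ring.
have := sqr_ge0 (u1 * v2 - u2 * v1); lra.
Qed.

Lemma dist_tri (p q r : pt R) : dist p r <= dist p q + dist q r.
Proof.
have h := dot_sq p q r.
have e : dist p r ^+ 2 = dist p q ^+ 2 + dist r q ^+ 2 - 2 * dot (psub p q) (psub r q).
  by rewrite !dist2 /dot /psub /=; ring.
rewrite (dist_sym q r) in e *.
have g1 := dist_ge0 p q; have g2 := dist_ge0 r q; have g3 := dist_ge0 p r.
set t := dot _ _ in h e.
have ht : - t <= dist p q * dist r q.
  have g12 : 0 <= dist p q * dist r q by apply: mulr_ge0.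
  nra.
have : dist p r ^+ 2 <= (dist p q + dist r q) ^+ 2 by nra.
nra.
Qed.

Lemma cs_sides (p q r : pt R) : 0 < dist p q -> 0 < dist r q ->
  cs p q r = (dist p q ^+ 2 + dist r q ^+ 2 - dist p r ^+ 2) / (2 * (dist p q * dist r q)).
Proof.
move=> h1 h2.
have e : dot (psub p q) (psub r q) = (dist p q ^+ 2 + dist r q ^+ 2 - dist p r ^+ 2) / 2.
  by rewrite !dist2 /dot /psub /=; field.
rewrite /cs e; field; rewrite ?gt_eqF //.
Qed.

Lemma sq0 (x y : R) : x ^+ 2 + y ^+ 2 = 0 -> x = 0 /\ y = 0.
Proof.
move=> h.
have hx : x ^+ 2 = 0 by have := sqr_ge0 x; have := sqr_ge0 y; lra.
have hy : y ^+ 2 = 0 by have := sqr_ge0 x; have := sqr_ge0 y; lra.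
by split; apply/eqP; rewrite -sqrf_eq0; apply/eqP.
Qed.

Lemma dist0 (p q : pt R) : dist p q = 0 -> p.1 = q.1 /\ p.2 = q.2.
Proof.
move=> h; have : (p.1 - q.1) ^+ 2 + (p.2 - q.2) ^+ 2 = 0 by rewrite -dist2 h expr0n.
by case/sq0 => /eqP; rewrite subr_eq0 => /eqP -> /eqP; rewrite subr_eq0 => /eqP ->.
Qed.

Lemma nondeg_dist (p q r : pt R) : cross (psub q p) (psub r p) != 0 ->
  [/\ 0 < dist p q, 0 < dist q r & 0 < dist p r].
Proof.
move=> nd.
have pos : forall a b : pt R, (dist a b = 0 -> False) -> 0 < dist a b.
  move=> a b H; rewrite lt_neqAle dist_ge0 andbT eq_sym; apply/eqP => //.
split; apply: pos => /dist0 [e1 e2]; move: nd; rewrite /cross /psub /= => /eqP; apply;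
  rewrite ?e1 ?e2; ring.
Qed.


Lemma tri3 (p q r : pt R) : cross (psub q p) (psub r p) != 0 ->
 [/\ 0 <= cs q p r + cs p q r, 0 <= cs q p r + cs p r q, 0 <= cs p q r + cs p r q,
   cs q p r ^+2 + cs p q r ^+2 + cs p r q ^+2 + 2 * cs q p r * cs p q r * cs p r q = 1 &
   [/\ -1 <= cs q p r <= 1, -1 <= cs p q r <= 1 & -1 <= cs p r q <= 1]].
Proof.
case/nondeg_dist => h1 h2 h3.
have h1' : 0 < dist q p by rewrite dist_sym.
have h2' : 0 < dist r q by rewrite dist_sym.
have h3' : 0 < dist r p by rewrite dist_sym.
rewrite (cs_sides q p r h1' h3') (cs_sides p q r h1 h2') (cs_sides p r q h3 h2).
rewrite !(dist_sym q p) !(dist_sym r p) !(dist_sym r q).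
have t1 := dist_tri q p r; have t2 := dist_tri p q r; have t3 := dist_tri p r q.
rewrite ?(dist_sym q p) ?(dist_sym r p) ?(dist_sym r q) in t1 t2 t3.
apply: tri_alg => //; lra.
Qed.

Lemma acos_le (x y : R) : -1 <= x -> x <= y -> y <= 1 -> acos y <= acos x.
Proof.
move=> x1 xy y1.
have hx : -1 <= x <= 1 by rewrite x1 /=; apply: le_trans y1.
have hy : -1 <= y <= 1 by rewrite y1 andbT; apply: le_trans xy.
rewrite leNgt; apply/negP => lt.
have : cos (acos y) < cos (acos x).
  rewrite ltr_cos //; rewrite in_itv /= ?acos_ge0 ?acos_lepi //.
rewrite !acosK ?in_itv //=; lra.
Qed.

Lemma minac_cos (a x : R) : 0 < a -> -1 <= x <= 1 -> a <= acos x -> x <= cos (Num.min a pi).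
Proof.
move=> a0 hx ha.
have m0 : 0 <= Num.min a pi by rewrite le_min (ltW a0) pi_ge0.
have m1 : Num.min a pi <= pi by rewrite ge_min lexx orbT.
have hm : Num.min a pi <= acos x by rewrite ge_min ha.
rewrite -{1}(acosK (x := x)) ?in_itv //.
rewrite leNgt; apply/negP.
rewrite ltr_cos ?in_itv /= ?acos_ge0 ?acos_lepi ?m0 ?m1 //.
by rewrite ltNge hm.
Qed.

Lemma cosmin_lt1 (a : R) : 0 < a -> cos (Num.min a pi) < 1.
Proof.
move=> a0.
have m0 : 0 < Num.min a pi by rewrite lt_min a0 pi_gt0.
have m1 : Num.min a pi <= pi by rewrite ge_min lexx orbT.
rewrite -cos0 ltr_cos ?in_itv /= ?m1 ?(ltW m0) ?lexx ?pi_ge0 //.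
Qed.


Lemma cs_sym (p q r : pt R) : cs p q r = cs r q p.
Proof.
rewrite /cs [dist r q * _]mulrC; congr (_ / _); rewrite /dot; ring.
Qed.

Definition sc (k : R) (u : pt R) : pt R := (k * u.1, k * u.2).

Lemma enorm_sc k (u : pt R) : enorm (sc k u) = `|k| * enorm u.
Proof.
rewrite /enorm /dot /sc /=.
have -> : k * u.1 * (k * u.1) + k * u.2 * (k * u.2) = k ^+ 2 * (u.1 * u.1 + u.2 * u.2) by ring.
by rewrite sqrtrM ?sqr_ge0 // sqrtr_sqr.
Qed.

Lemma cs_scale (p q r p' r' : pt R) k l :
  psub p q = sc k (psub p' q) -> psub r q = sc l (psub r' q) ->
  cs p q r = (k * l) / (`|k| * `|l|) * cs p' q r'.
Proof.
move=> hp hr; rewrite /cs /dist hp hr !enorm_sc.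
have -> : dot (sc k (psub p' q)) (sc l (psub r' q)) = k * l * dot (psub p' q) (psub r' q)
  by rewrite /dot /sc /=; ring.
rewrite !invfM; ring.
Qed.

Lemma lag_cs (p q r : pt R) : 0 < dist p q -> 0 < dist r q ->
  cross (psub p q) (psub r q) ^+ 2 = (dist p q * dist r q) ^+ 2 * (1 - cs p q r ^+ 2).
Proof.
move=> h1 h2.
have L : cross (psub p q) (psub r q) ^+ 2 + dot (psub p q) (psub r q) ^+ 2
         = (dist p q * dist r q) ^+ 2.
  by rewrite exprMn !dist2 /cross /dot /psub /=; ring.
have E : dot (psub p q) (psub r q) = cs p q r * (dist p q * dist r q).
  by rewrite /cs divfK // mulf_neq0 // gt_eqF.
rewrite E in L.
have -> : cross (psub p q) (psub r q) ^+ 2 = (dist p q * dist r q) ^+ 2 - (cs p q r * (dist p q * dist r q)) ^+ 2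
  by rewrite -L; ring.
ring.
Qed.

Lemma ratio_alg (a b c BQ PC D2 eta : R) : 0 < a -> 0 < b -> 0 < c -> 0 < eta <= 1 ->
  0 <= BQ -> 0 <= PC -> D2 <= c ^+ 2 * PC ^+ 2 ->
  c ^+ 2 * a ^+ 2 * eta <= D2 -> c ^+ 2 * b ^+ 2 * eta <= D2 ->
  BQ ^+ 2 <= c ^+ 2 + a ^+ 2 -> c <= a + b -> BQ <= 3 / eta * PC.
Proof.
move=> a0 b0 c0 /andP[e0 e1] q0 p0 h1 h2 h3 h4 h5.
have s0 : c ^+ 2 <= (a + b) ^+ 2 by rewrite ler_pXn2r // ?nnegrE; lra.
have s1 : c ^+ 2 <= 2 * a ^+ 2 + 2 * b ^+ 2.
  have := sqr_ge0 (a - b).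
  have -> : (a - b) ^+ 2 = 2 * a ^+ 2 + 2 * b ^+ 2 - (a + b) ^+ 2 by ring.
  lra.
have s2 : c ^+ 2 * c ^+ 2 <= c ^+ 2 * (2 * a ^+ 2 + 2 * b ^+ 2).
  by apply: ler_wpM2l => //; apply: sqr_ge0.
have s3 : c ^+ 2 * BQ ^+ 2 * eta <= c ^+ 2 * (c ^+ 2 + a ^+ 2) * eta.
  apply: ler_wpM2r; first exact: ltW.
  by apply: ler_wpM2l => //; apply: sqr_ge0.
have s4 : c ^+ 2 * (c ^+ 2 + a ^+ 2) * eta <= 5 * D2 by nra.
have s5 : c ^+ 2 * (BQ ^+ 2 * eta) <= c ^+ 2 * (5 * PC ^+ 2) by nra.
have c2 : 0 < c ^+ 2 by rewrite exprn_gt0.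
have s6 : BQ ^+ 2 * eta <= 5 * PC ^+ 2 by rewrite -(ler_pM2l c2).
have s7 : (BQ * eta) ^+ 2 <= (3 * PC) ^+ 2.
  rewrite !exprMn.
  have : BQ ^+ 2 * eta ^+ 2 <= BQ ^+ 2 * eta.
    have g2 : 0 <= BQ ^+ 2 * eta by apply: mulr_ge0 => //; [apply: sqr_ge0 | apply: ltW].
    rewrite expr2 mulrA; nra.
  have := sqr_ge0 PC; nra.
have s8 : BQ * eta <= 3 * PC.
  have g : 0 <= 3 * PC by nra.
  have g' : 0 <= BQ * eta by apply: mulr_ge0 => //; apply: ltW.
  by rewrite -(ler_pXn2r (n := 2)) // ?nnegrE.
by rewrite mulrAC ler_pdivlMr.
Qed.


Lemma maxac_any (a b c : pt R) m : 0 <= m <= 1 -> cross (psub b a) (psub c a) != 0 ->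
  [\/ -m <= cs b a c <= m, -m <= cs a b c <= m | -m <= cs a c b <= m] ->
  Maxac_tri (acos (-m)) a b c.
Proof.
move=> /andP[m0 m1] nd H.
case: (tri3 _ _ _ nd) => s1 s2 s3 _ [/andP[x0 x1] /andP[y0 y1] /andP[z0 z1]].
have [h1 h2 h3] : [/\ -m <= cs b a c, -m <= cs a b c & -m <= cs a c b].
  by case: H => /andP[u v]; split; lra.
rewrite /Maxac_tri; split.
- by change (acos (cs b a c) <= acos (- m)); apply: acos_le => //; lra.
- by change (acos (cs a b c) <= acos (- m)); apply: acos_le => //; lra.
- by change (acos (cs a c b) <= acos (- m)); apply: acos_le => //; lra.
Qed.

Lemma cross_le (u w : pt R) : cross u w ^+ 2 <= (u.1 ^+ 2 + u.2 ^+ 2) * (w.1 ^+ 2 + w.2 ^+ 2).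
Proof.
have e : (u.1 ^+ 2 + u.2 ^+ 2) * (w.1 ^+ 2 + w.2 ^+ 2) - cross u w ^+ 2 = (u.1 * w.1 + u.2 * w.2) ^+ 2
  by rewrite /cross; ring.
have := sqr_ge0 (u.1 * w.1 + u.2 * w.2); lra.
Qed.

Lemma ratio_geo (A B C : pt R) (s t k : R) : 0 <= k < 1 -> 0 < t < 1 ->
  cross (psub B A) (psub C A) != 0 -> -k <= cs B A C <= k -> -k <= cs A B C <= k ->
  dist B (A.1 + t * (C.1 - A.1), A.2 + t * (C.2 - A.2))
    <= 3 / (1 - k ^+ 2) * dist (A.1 + s * (B.1 - A.1), A.2 + s * (B.2 - A.2)) C.
Proof.
move=> /andP[k0 k1] /andP[t0 t1] nd /andP[ca0 ca1] /andP[cb0 cb1].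
set P := (A.1 + s * _, _); set Q := (A.1 + t * _, _).
case: (nondeg_dist _ _ _ nd) => dAB dBC dAC.
have dBA : 0 < dist B A by rewrite dist_sym.
have dCA : 0 < dist C A by rewrite dist_sym.
have dCB : 0 < dist C B by rewrite dist_sym.
set D := cross (psub B A) (psub C A).
apply: (@ratio_alg (dist B C) (dist C A) (dist B A) _ _ (D ^+ 2)) => //.
- apply/andP; split; nra.
- exact: dist_ge0.
- exact: dist_ge0.
- have -> : D = - cross (psub B A) (psub P C) by rewrite /D /cross /psub /= ; ring.
  rewrite sqrrN !dist2; exact: cross_le.
- have -> : D ^+ 2 = cross (psub A B) (psub C B) ^+ 2 by rewrite /D /cross /psub /=; ring.
  rewrite (lag_cs _ _ _ dAB dCB) (dist_sym A B) (dist_sym C B) exprMn.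
  have : 1 - k ^+ 2 <= 1 - cs A B C ^+ 2 by nra.
  have : 0 <= dist B A ^+ 2 * dist B C ^+ 2 by rewrite mulr_ge0 // sqr_ge0.
  nra.
- rewrite /D (lag_cs _ _ _ dBA dCA) exprMn.
  have : 1 - k ^+ 2 <= 1 - cs B A C ^+ 2 by nra.
  have : 0 <= dist B A ^+ 2 * dist C A ^+ 2 by rewrite mulr_ge0 // sqr_ge0.
  nra.
- have e : dist B Q ^+ 2 = (1 - t) * dist B A ^+ 2 + t * dist B C ^+ 2 - t * (1 - t) * dist C A ^+ 2.
    by rewrite !dist2 /Q /=; ring.
  rewrite e.
  have g1 := sqr_ge0 (dist B A); have g2 := sqr_ge0 (dist B C); have g3 := sqr_ge0 (dist C A).
  have h1 : 0 <= t * (1 - t) * dist C A ^+ 2 by rewrite !mulr_ge0 //; lra.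
  have h2 : 0 <= t * dist B A ^+ 2 by rewrite !mulr_ge0 //; lra.
  have h3 : 0 <= (1 - t) * dist B C ^+ 2 by rewrite !mulr_ge0 //; lra.
  lra.
- exact: dist_tri.
Qed.


Lemma config (A B C : pt R) (s t k : R) : 0 <= k < 1 -> 0 < s < 1 -> 0 < t < 1 ->
  cross (psub B A) (psub C A) != 0 ->
  cs B A C <= k -> cs A B C <= k -> cs A C B <= k ->
  Maxac_tri (acos (- ((3 + k) / 4))) A (A.1 + s * (B.1 - A.1), A.2 + s * (B.2 - A.2))
                                        (A.1 + t * (C.1 - A.1), A.2 + t * (C.2 - A.2)) /\
  RDP (3 / (1 - k ^+ 2)) (acos (- ((3 + k) / 4)))
      (A.1 + s * (B.1 - A.1), A.2 + s * (B.2 - A.2)) B C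
      (A.1 + t * (C.1 - A.1), A.2 + t * (C.2 - A.2)).
Proof.
move=> hk hs ht nd cA cB cC.
case/andP: hk => k0 k1; case/andP: hs => s0 s1; case/andP: ht => t0 t1.
set P := (A.1 + s * _, _); set Q := (A.1 + t * _, _); set m := (3 + k) / 4.
have [S1 S2 S3 _ [/andP[bx0 bx1] /andP[by0 by1] /andP[bz0 bz1]]] := tri3 A B C nd.
have hm : 0 <= m <= 1 by apply/andP; split; rewrite /m; lra.
have km : k <= m by rewrite /m; lra.
set D := cross (psub B A) (psub C A) in nd.
have sc1 : forall u : pt R, u = sc 1 u by case=> x y; rewrite /sc !mul1r.
have e1 : cs P A Q = cs B A C.
  rewrite (cs_scale P A Q B C s t); last 2 first.
  - by rewrite /psub /sc /=; congr (_, _); ring.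
  - by rewrite /psub /sc /=; congr (_, _); ring.
  by rewrite !gtr0_norm // divff ?mul1r // mulf_neq0 // gt_eqF.
have e2 : cs P B C = cs A B C.
  rewrite (cs_scale P B C A C (1 - s) 1); last 2 first.
  - by rewrite /psub /sc /=; congr (_, _); ring.
  - exact: sc1.
  by rewrite !gtr0_norm ?subr_gt0 // ?mul1r ?mulr1 divff ?mul1r // gt_eqF // subr_gt0.
have e3 : cs B C Q = cs B C A.
  rewrite (cs_scale B C Q B A 1 (1 - t)); last 2 first.
  - exact: sc1.
  - by rewrite /psub /sc /=; congr (_, _); ring.
  by rewrite !gtr0_norm ?subr_gt0 // ?mul1r ?mulr1 divff ?mul1r // gt_eqF // subr_gt0.
have e4 : cs P Q C = - cs P Q A.
  rewrite (cs_scale P Q C P A 1 (- ((1 - t) / t))); last 2 first.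
  - exact: sc1.
  - rewrite /psub /sc /=; congr (_, _); field; by rewrite gt_eqF.
  have n0 : - ((1 - t) / t) < 0 by rewrite oppr_lt0 divr_gt0 // subr_gt0.
  rewrite (gtr0_norm ltr01) (ltr0_norm n0) !mul1r opprK mulNr divff ?mulN1r //.
  by rewrite gt_eqF // divr_gt0 // subr_gt0.
have e5 : cs B P Q = - cs A P Q.
  rewrite (cs_scale B P Q A Q (- ((1 - s) / s)) 1); last 2 first.
  - rewrite /psub /sc /=; congr (_, _); field; by rewrite gt_eqF.
  - exact: sc1.
  have n0 : - ((1 - s) / s) < 0 by rewrite oppr_lt0 divr_gt0 // subr_gt0.
  rewrite (gtr0_norm ltr01) (ltr0_norm n0) !mulr1 opprK mulNr divff ?mulN1r //.
  by rewrite gt_eqF // divr_gt0 // subr_gt0.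
have nzD : D != 0 by [].
have n1 : cross (psub P A) (psub Q A) != 0.
  have -> : cross (psub P A) (psub Q A) = s * t * D by rewrite /D /cross /psub /=; ring.
  by rewrite !mulf_neq0 // gt_eqF.
have n2 : cross (psub B P) (psub C P) != 0.
  have -> : cross (psub B P) (psub C P) = (1 - s) * D by rewrite /D /cross /psub /=; ring.
  by rewrite !mulf_neq0 // gt_eqF // subr_gt0.
have n3 : cross (psub C P) (psub Q P) != 0.
  have -> : cross (psub C P) (psub Q P) = s * (1 - t) * D by rewrite /D /cross /psub /=; ring.
  by rewrite !mulf_neq0 // gt_eqF // subr_gt0.
have n4 : cross (psub C B) (psub Q B) != 0.
  have -> : cross (psub C B) (psub Q B) = (1 - t) * D by rewrite /D /cross /psub /=; ring.
  by rewrite !mulf_neq0 // gt_eqF // subr_gt0.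
have n5 : cross (psub Q B) (psub P B) != 0.
  have -> : cross (psub Q B) (psub P B) = t * (1 - s) * D by rewrite /D /cross /psub /=; ring.
  by rewrite !mulf_neq0 // gt_eqF // subr_gt0.
have [T1 T2 T3 Tid [/andP[tx0 tx1] /andP[ty0 ty1] /andP[tz0 tz1]]] := tri3 A P Q n1.
split.
  apply: maxac_any => //; apply: Or31; rewrite e1; apply/andP; split; lra.
split.
  rewrite /convex_quad /=.
  have -> : cross (psub B P) (psub C B) = (1 - s) * D by rewrite /D /cross /psub /=; ring.
  have -> : cross (psub C B) (psub Q C) = (1 - t) * D by rewrite /D /cross /psub /=; ring.
  have -> : cross (psub Q C) (psub P Q) = (1 - t) * s * D by rewrite /D /cross /psub /=; ring.
  have -> : cross (psub P Q) (psub B P) = t * (1 - s) * D by rewrite /D /cross /psub /=; ring.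
  have p1 : 0 < 1 - s by rewrite subr_gt0.
  have p2 : 0 < 1 - t by rewrite subr_gt0.
  case: (ltgtP D 0) => hD.
  - by right; split; rewrite ?pmulr_rlt0 ?mulr_gt0.
  - by left; split; rewrite ?pmulr_rgt0 ?mulr_gt0.
  - by move: nzD; rewrite hD eqxx.
have := @third_bound k (cs A P Q) (cs A Q P) (cs P A Q).
case.
- by apply/andP; split.
- by rewrite -[RHS]Tid; ring.
- by apply/andP; split.
- by apply/andP; split.
- rewrite e1; lra.
- move=> hy; rewrite -/m in hy; right; split.
  + have [d1 d2 d3] := nondeg_dist _ _ _ n5.
    rewrite ler_pdivrMr //.
    have := ratio_geo A C B t s k (_ : 0 <= k < 1) (_ : 0 < s < 1).
    rewrite -/P -/Q (dist_sym C P) (dist_sym Q B); apply.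
    * by apply/andP.
    * by apply/andP.
    * have -> : cross (psub C A) (psub B A) = - D by rewrite /D /cross /psub /=; ring.
      by rewrite oppr_eq0.
    * rewrite cs_sym; apply/andP; split; lra.
    * apply/andP; split; lra.
  + split.
    * apply: maxac_any => //; apply: Or32; rewrite e3 cs_sym; apply/andP; split; lra.
    * apply: maxac_any => //; apply: Or33; rewrite e5; apply/andP; split; lra.
- move=> hz; rewrite -/m in hz; left; split.
  + have [d1 d2 d3] := nondeg_dist _ _ _ n3.
    rewrite ler_pdivrMr //.
    apply: ratio_geo => //; try by apply/andP.
    * apply/andP; split; lra.
    * apply/andP; split; lra.
  + split.
    * apply: maxac_any => //; apply: Or32; rewrite e2; apply/andP; split; lra.
    * apply: maxac_any => //; apply: Or33; rewrite e4 (cs_sym P Q A); apply/andP; split; lra.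
Qed.


Definition G3 (k : R) (a b c : pt R) : Prop :=
  [/\ cross (psub b a) (psub c a) != 0, cs b a c <= k, cs a b c <= k & cs a c b <= k].

Lemma G3_12 k (a b c : pt R) : G3 k a b c -> G3 k b a c.
Proof.
case=> nd h1 h2 h3; split => //; last by rewrite cs_sym.
have -> : cross (psub a b) (psub c b) = - cross (psub b a) (psub c a)
  by rewrite /cross /psub /=; ring.
by rewrite oppr_eq0.
Qed.

Lemma G3_23 k (a b c : pt R) : G3 k a b c -> G3 k a c b.
Proof.
case=> nd h1 h2 h3; split => //; last by rewrite cs_sym.
  have -> : cross (psub c a) (psub b a) = - cross (psub b a) (psub c a)
    by rewrite /cross /psub /=; ring.
  by rewrite oppr_eq0.
Qed.

Lemma dist_pt0 (x : pt R) : dist x x = 0.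
Proof. by rewrite /dist /enorm /dot /psub /= !subrr mul0r addr0 sqrtr0. Qed.

Lemma G3_perm k (x y z A B C : pt R) : G3 k x y z -> perm_eq [:: A; B; C] [:: x; y; z] -> G3 k A B C.
Proof.
move=> g hp.
have g1 := G3_12 _ _ _ _ g; have g2 := G3_23 _ _ _ _ g; have g3 := G3_23 _ _ _ _ g1; have g4 := G3_12 _ _ _ _ g2;
have g5 := G3_23 _ _ _ _ g4.
have [d1 d2 d3] : [/\ 0 < dist x y, 0 < dist y z & 0 < dist x z].
  by case: g => nd _ _ _; apply: nondeg_dist.
have nxy : x != y by apply/eqP => e; move: d1; rewrite e dist_pt0 ltxx.
have nyz : y != z by apply/eqP => e; move: d2; rewrite e dist_pt0 ltxx.
have nxz : x != z by apply/eqP => e; move: d3; rewrite e dist_pt0 ltxx.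
have u : uniq [:: A; B; C].
  by rewrite (perm_uniq hp) /= !inE negb_or nxy nxz nyz.
have hA : A \in [:: x; y; z] by rewrite -(perm_mem hp) inE eqxx.
have hB : B \in [:: x; y; z] by rewrite -(perm_mem hp) !inE eqxx ?orbT.
have hC : C \in [:: x; y; z] by rewrite -(perm_mem hp) !inE eqxx ?orbT.
move: hA hB hC; rewrite !inE.
case/or3P=> /eqP ?; case/or3P=> /eqP ?; case/or3P=> /eqP ?; subst; move: u;
  rewrite /= !inE ?eqxx ?orbT ?andbF //.
Qed.

End Aux.
Arguments G3 {R}.
Arguments G3_perm {R}.
Arguments config {R}.
Arguments tri3 {R}.
Arguments minac_cos {R}.
Arguments maxac_any {R}.

Theorem lemma4p4 (R : realType) (alpha : R) : 0 < alpha ->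
  exists (N : R) (psi : R), 0 < psi < pi /\
  forall (Omega : set (pt R)) (gx gy : R -> R) (Uh : seq (tri R)) (Fh : set (elem R)),
    convex_polygon Omega ->
    C2 gx -> C2 gy -> regular_curve gx gy -> Gamma gx gy `<=` Omega ->
    triangulation Omega Uh -> quasi_uniform Uh -> Minac_mesh alpha Uh ->
    interface_fitted gx gy Uh Fh ->
    forall e, Fh e -> elem_ok N psi e.
Proof.
move=> a0.
set k0 := cos (Num.min alpha pi).
set k := Num.max k0 0.
have k0lt := cosmin_lt1 _ _ a0.
have kk : 0 <= k < 1 by rewrite le_max lexx orbT /= gt_max k0lt ltr01.
have [k0' k1'] := andP kk.
have k0k : k0 <= k by rewrite le_max lexx.
set m := (3 + k) / 4.
exists (3 / (1 - k ^+ 2)), (acos (- m)).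
split.
  apply/andP; split; [apply: acos_gt0 | apply: acos_ltpi]; apply/andP; split; rewrite /m; lra.
move=> Omega gx gy Uh Fh _ _ _ _ _ [ndT _ _] _ hmin [_ hFh] e.
have GT : forall T, T \in Uh -> G3 k (tv1 T) (tv2 T) (tv3 T).
  move=> T hT; have nd := ndT T hT; rewrite /nondeg in nd.
  have [_ _ _ _ [b1 b2 b3]] := tri3 _ _ _ nd.
  case: (hmin T hT) => h1 h2 h3.
  split => //; apply: le_trans k0k; exact: minac_cos.
rewrite hFh /= => -[[T [hT _ ->]] | [T [A [B [C [P [Q [hT _ cut he]]]]]]]].
- case: (GT T hT) => nd h1 h2 h3 /=.
  have [_ S2 _ _ [/andP[x0 x1] _ /andP[z0 z1]]] := tri3 _ _ _ nd.
  apply: maxac_any => //; first by apply/andP; split; rewrite /m; lra.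
  by apply: Or31; apply/andP; split; rewrite /m; lra.
- case: cut => hp [s [/andP[s0 s1] eP]] [t [/andP[t0 t1] eQ]] _.
  have g : G3 k A B C by apply: G3_perm (GT T hT) hp.
  case: g => nd h1 h2 h3.
  have hs : 0 < s < 1 by rewrite s0 s1.
  have ht : 0 < t < 1 by rewrite t0 t1.
  have [c1 c2] := config A B C s t k kk hs ht nd h1 h2 h3.
  by case: he => -> /=; rewrite eP eQ.
Qed.
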